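(* Let $n\ge 3$, $n\neq 4$, and let $\Gamma$ be the graph with vertex set $\{u_i,v_i: i\in\mathbb Z_n\}$ in which $u_i$ and $v_i$ both have neighbourhood $\{u_{i-1},u_{i+1},v_{i-1},v_{i+1}\}$ (this is the Rose Window graph $R_n(2,1)$ with $u_i=x_i$, $v_i=y_{i-1}$). For $i\in\mathbb Z_n$ let $\sigma_i$ be the automorphism interchanging $u_i$ and $v_i$ and fixing all other vertices, and let $N=\langle\sigma_0,\ldots,\sigma_{n-1}\rangle$; denote $\prod_{j}\sigma_j^{i_j}\in N$ ($i_j\in\{0,1\}$) by the tuple $(i_0,i_1,\ldots,i_{n-1})$. Let $\mathcal M$ be a map of class $2_{\{0,1\}}$ with underlying graph $\Gamma$ and let $T=N\cap\mathrm{Aut}(\mathcal M)$. Then either $T=\{(0,0,\ldots,0),(0,1,1,0,1,1,\ldots,0,1,1),(1,0,1,1,0,1,\ldots,1,0,1),(1,1,0,1,1,0,\ldots,1,1,0)\}$, in which case $3\mid n$, or $T=\{(0,0,\ldots,0),(0,1,0,1,\ldots,0,1),(1,0,1,0,\ldots,1,0),(1,1,\ldots,1)\}$, in which case $2\mid n$. In particular, $\gcd(n,6)\neq 1$.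
   Context: A map is a $2$-cell embedding of a connected simple graph (its underlying graph) in a closed surface; the components of the complement are the faces. All maps considered are polytopal: flags correspond bijectively to incident triples (vertex, edge, face). For a flag $\Phi$ and $i\in\{0,1,2\}$, $\Phi^i$ is the unique flag differing from $\Phi$ exactly in its vertex ($i=0$), edge ($i=1$) or face ($i=2$). $\mathrm{Aut}(\mathcal M)$ is the group of automorphisms of the underlying graph preserving the set of faces, acting on flags. A map is in class $2_{\{0,1\}}$ if $\mathrm{Aut}(\mathcal M)$ has exactly two orbits on flags and for every flag $\Phi$, the flags $\Phi^0,\Phi^1$ lie in the orbit of $\Phi$ while $\Phi^2$ does not. *)

(* Defs.v *)
From mathcomp Require Import all_boot all_fingroup.
Set Implicit Arguments. Unset Strict Implicit. Unset Printing Implicit Defensive.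

Section RoseWindow.
Variable n : nat.

(* Vertices: (false, i) = u_i, (true, i) = v_i, i in Z_n. *)
Definition RV := (bool * 'I_n)%type.

Definition radj (x y : RV) : bool :=
  ((val x.2).+1 %% n == val y.2) || ((val y.2).+1 %% n == val x.2).

Definition redges : {set {set RV}} :=
  [set [set p.1; p.2] | p in [set p : RV * RV | radj p.1 p.2]].

(* A face is a simple cycle of Gamma, given by its (nonempty) edge set:
   every vertex meets 0 or 2 of its edges, and it is connected. *)
Definition face_conn (f : {set {set RV}}) : rel {set RV} :=
  fun a b => [&& a \in f, b \in f & a :&: b != set0].

Definition is_cycle (f : {set {set RV}}) : Prop :=
  [/\ f \subset redges, f != set0,
      (forall x : RV, #|[set e in f | x \in e]| \in [:: 0; 2]) &
      (forall a b, a \in f -> b \in f -> connect (face_conn f) a b)].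

Definition link_rel (F : {set {set {set RV}}}) (x : RV) : rel {set RV} :=
  fun a b => [&& a \in redges, b \in redges, x \in a, x \in b &
                 [exists f in F, (a \in f) && (b \in f)]].

(* A polytopal map with underlying graph Gamma, given by its set of faces
   (each face a simple cycle of Gamma): every edge lies on exactly two faces
   and the faces around each vertex form a single cycle (so the result of
   gluing discs along the faces is a closed surface). *)
Definition is_map (F : {set {set {set RV}}}) : Prop :=
  [/\ (forall f, f \in F -> is_cycle f),
      (forall e, e \in redges -> #|[set f in F | e \in f]| = 2) &
      (forall x a b, a \in redges -> b \in redges -> x \in a -> x \in b ->
          connect (link_rel F x) a b)].

Definition face_img (g : {perm RV}) (f : {set {set RV}}) : {set {set RV}} :=
  (fun a : {set RV} => g @: a) @: f.

Definition Aut (F : {set {set {set RV}}}) : {set {perm RV}} :=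
  [set g : {perm RV} | [forall x, forall y, radj (g x) (g y) == radj x y] &&
                      [forall f in F, face_img g f \in F]].

Definition flag := (RV * {set RV} * {set {set RV}})%type.

Definition is_flag (F : {set {set {set RV}}}) (p : flag) : Prop :=
  [/\ p.1.1 \in p.1.2, p.1.2 \in redges, p.2 \in F & p.1.2 \in p.2].

Definition flag_act (g : {perm RV}) (p : flag) : flag :=
  (g p.1.1, g @: p.1.2, face_img g p.2).

Definition same_orbit (F : {set {set {set RV}}}) (p q : flag) : Prop :=
  exists2 g, g \in Aut F & flag_act g p = q.

(* q = p^0, p^1, p^2 respectively (q is the unique flag differing from p
   exactly in its vertex / edge / face). *)
Definition diff0 (p q : flag) := [/\ p.1.1 != q.1.1, p.1.2 = q.1.2 & p.2 = q.2].
Definition diff1 (p q : flag) := [/\ p.1.1 = q.1.1, p.1.2 != q.1.2 & p.2 = q.2].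
Definition diff2 (p q : flag) := [/\ p.1.1 = q.1.1, p.1.2 = q.1.2 & p.2 != q.2].

Definition class2_01 (F : {set {set {set RV}}}) : Prop :=
  [/\ (exists p1 p2, [/\ is_flag F p1, is_flag F p2, ~ same_orbit F p1 p2 &
        forall q, is_flag F q -> same_orbit F p1 q \/ same_orbit F p2 q]),
      (forall p q, is_flag F p -> is_flag F q -> diff0 p q -> same_orbit F p q),
      (forall p q, is_flag F p -> is_flag F q -> diff1 p q -> same_orbit F p q) &
      (forall p q, is_flag F p -> is_flag F q -> diff2 p q -> ~ same_orbit F p q)].

Definition sigma (i : 'I_n) : {perm RV} := tperm (false, i) (true, i).

Definition Ngrp : {set {perm RV}} := <<[set sigma i | i : 'I_n]>>%g.

Definition tuple_elt (c : 'I_n -> bool) : {perm RV} :=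
  (\prod_(j < n) (if c j then sigma j else 1))%g.

Definition Tgrp (F : {set {set {set RV}}}) : {set {perm RV}} := Ngrp :&: Aut F.

End RoseWindow.

(* Main.v *)
Require Import Defs.
From mathcomp Require Import all_boot all_fingroup.
From mathcomp Require Import zify.
From Stdlib Require Import Classical_Prop.
Set Implicit Arguments. Unset Strict Implicit. Unset Printing Implicit Defensive.


Section Idx.
Variable n : nat.
Hypothesis n3 : 2 < n.

Lemma npos : 0 < n. Proof. by apply: leq_trans n3. Qed.

Definition idx (k : nat) : 'I_n := Ordinal (ltn_pmod k npos).

Lemma idx_val (i : 'I_n) : idx i = i.
Proof. by apply/val_inj; rewrite /= modn_small. Qed.

Lemma idx_eqE a b : (idx a == idx b) = (a == b %[mod n]).
Proof. by []. Qed.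

Lemma idx_shift a c : (idx a == idx (a + c)) = (n %| c).
Proof.
rewrite idx_eqE -{1}[a]addn0 eqn_modDl mod0n eq_sym.
by [].
Qed.

Lemma idx_addn a : idx (a + n) = idx a.
Proof. by apply/val_inj; rewrite /= modnDr. Qed.

Lemma idx_mod a : idx (a %% n) = idx a.
Proof. by apply/val_inj; rewrite /= modn_mod. Qed.

Lemma idx_neq1 a : idx a != idx (a + 1).
Proof. by rewrite idx_shift dvdn1; apply/eqP => E; move: n3; rewrite E. Qed.

Lemma idx_neq2 a : idx a != idx (a + 2).
Proof. by rewrite idx_shift; apply/negP => /(dvdn_leq (isT : 0 < 2)); rewrite leqNgt n3. Qed.

Definition adjI (i j : 'I_n) : bool := ((val i).+1 %% n == val j) || ((val j).+1 %% n == val i).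

Lemma adjI_sym i j : adjI i j = adjI j i.
Proof. by rewrite /adjI orbC. Qed.

Lemma nbr k (m : 'I_n) : adjI (idx (k + 1)) m = (m == idx k) || (m == idx (k + 2)).
Proof.
rewrite /adjI orbC; congr orb.
  have -> : (m == idx k) = (val m == k %% n) by [].
  rewrite /= -addn1 (eqn_modDr 1 m k n) (modn_small (ltn_ord m)).
  by [].
have -> : (m == idx (k + 2)) = (val m == (k + 2) %% n) by [].
by rewrite /= -addn1 modnDml -addnA eq_sym.
Qed.

Lemma adj_succ k : adjI (idx k) (idx (k + 1)).
Proof. by rewrite /adjI /= -addn1 modnDml eqxx. Qed.

End Idx.

Section T.
Variable n : nat.
Hypothesis n3 : 2 < n.
Hypothesis n4 : n != 4.
Lemma idx_pred (j : 'I_n) : j = idx n3 ((j + n.-1) + 1).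
Proof.
rewrite -addnA addn1 prednK ?npos // idx_addn ?idx_val //.
Qed.

Lemma twinI (j k : 'I_n) : (forall m, adjI j m = adjI k m) -> j = k.
Proof.
move=> H; have [a Ej] : exists a, j = idx n3 (a + 1) := ex_intro _ _ (idx_pred j).
subst j.
have A2 : adjI k (idx n3 (a + 2)).
  by rewrite -H nbr eqxx orbT.
rewrite adjI_sym (_ : a + 2 = (a + 1) + 1) ?nbr in A2; last by rewrite -addnA.
case/orP: A2 => /eqP Ek.
  by rewrite Ek.
have A0 : adjI k (idx n3 a) by rewrite -H nbr eqxx.
rewrite Ek (_ : a + 1 + 2 = (a + 2) + 1) ?nbr in A0; last by rewrite -!addnA.
case/orP: A0 => /eqP E.
  by move: (idx_neq2 n3 a); rewrite E eqxx.
move: (idx_shift n3 a 4); rewrite E -addnA eqxx => /esym D.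
move: (dvdn_leq (isT : 0 < 4) D) => L.
have : (n == 3) || (n == 4) by move: n3 L; case: n => // -[] // -[] // -[] // -[] // -[] //.
by rewrite (negbTE n4) orbF => /eqP E3; exfalso; move: D; rewrite E3.
Qed.
End T.

Section T.
Variable n : nat.

Lemma tuple_seq (c : 'I_n -> bool) (r : seq 'I_n) b j : uniq r ->
  (\prod_(i <- r) (if c i then sigma i else 1))%g (b, j) =
  if c j && (j \in r) then (~~ b, j) else (b, j).
Proof.
elim: r b => [|a r IH] b /=; first by rewrite big_nil perm1 andbF.
case/andP => ar ur; rewrite big_cons permM.
case: (eqVneq a j) => [E|ne].
  subst a; rewrite inE eqxx orTb andbT.
  case: (c j) => /=.
    have -> : sigma j (b, j) = (~~ b, j) by rewrite /sigma; case: b; rewrite ?tpermL ?tpermR.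
    by rewrite IH // (negbTE ar) andbF.
  by rewrite perm1 IH // (negbTE ar) andbF.
rewrite inE (eq_sym j) (negbTE ne) /=.
have -> : ((if c a then sigma a else 1)%g (b, j)) = (b, j).
  case: (c a); last by rewrite perm1.
  by rewrite /sigma tpermD // xpair_eqE (negbTE ne) andbF.
by rewrite IH.
Qed.

Lemma tuple_eval (c : 'I_n -> bool) b j :
  tuple_elt c (b, j) = if c j then (~~ b, j) else (b, j).
Proof. by rewrite /tuple_elt tuple_seq ?index_enum_uniq // mem_index_enum andbT. Qed.

Lemma tuple_ext (c c' : 'I_n -> bool) : (forall j, c j = c' j) -> tuple_elt c = tuple_elt c'.
Proof. by move=> H; apply: eq_bigr => j _; rewrite H. Qed.

Lemma tuple_false : tuple_elt (fun _ : 'I_n => false) = 1%g.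
Proof. by apply/permP => -[b j]; rewrite tuple_eval perm1. Qed.

Definition IP (t : {perm RV n}) := forall x, (t x).2 = x.2.

Lemma IP_fix t : IP t -> forall b j,
  t (b, j) = if t (false, j) == (false, j) then (b, j) else (~~ b, j).
Proof.
move=> H b j.
have Hf : t (false, j) = ((t (false, j)).1, j) by move: (H (false, j)); case: (t (false, j)) => c j' /= ->.
have Ht : t (true, j) = ((t (true, j)).1, j) by move: (H (true, j)); case: (t (true, j)) => c j' /= ->.
have inj : t (false, j) != t (true, j) by rewrite (inj_eq perm_inj).
move: inj; case: b; rewrite Hf Ht; move: (t (false, j)).1 (t (true, j)).1 => c1 c2;
  by case: c1; case: c2; rewrite !xpair_eqE ?eqxx.
Qed.

Lemma IP_tuple t : IP t -> t = tuple_elt (fun j => t (false, j) != (false, j)).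
Proof.
move=> H; apply/permP => -[b j]; rewrite tuple_eval (IP_fix H).
by case: (t (false, j) == (false, j)).
Qed.


Lemma sigma_IP i : IP (sigma i).
Proof. by move=> x; rewrite /sigma; case: tpermP => // ->. Qed.

Lemma Ngrp_IP t : (t \in Ngrp n) <-> IP t.
Proof.
split=> [Ht|H].
  have gG : group_set [set s : {perm RV n} | [forall x, (s x).2 == x.2]].
    apply/group_setP; split.
      by rewrite inE; apply/forallP => x; rewrite perm1.
    move=> x y; rewrite !inE => /forallP Hx /forallP Hy; apply/forallP => z.
    by rewrite permM (eqP (Hy _)) (eqP (Hx _)).
  have : Ngrp n \subset Group gG.
    rewrite gen_subG; apply/subsetP => s /imsetP [i _ ->]; rewrite inE.
    by apply/forallP => x; rewrite sigma_IP.
  by move/subsetP => /(_ t Ht); rewrite inE => /forallP Hf x; apply/eqP.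
rewrite (IP_tuple H) /tuple_elt; apply: group_prod => i _.
case: ifP => _; last exact: group1.
by apply: mem_gen; apply: imset_f.
Qed.

End T.

Section T.
Variable n : nat.
Variable F : {set {set {set RV n}}}.

Lemma aut_adj (g : {perm RV n}) : g \in Defs.Aut F -> forall x y, radj (g x) (g y) = radj x y.
Proof. by rewrite inE => /andP [/forallP H _] x y; move: (H x) => /forallP /(_ y) /eqP. Qed.

Lemma aut_face (g : {perm RV n}) : g \in Defs.Aut F -> forall f, f \in F -> face_img g f \in F.
Proof. by rewrite inE => /andP [_ /forallP H] f Hf; move: (H f); rewrite Hf. Qed.

Lemma imsetM (g h : {perm RV n}) (a : {set RV n}) : (g * h)%g @: a = h @: (g @: a).
Proof. by rewrite -imset_comp; apply: eq_imset => x; rewrite permM. Qed.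

Lemma imset1p (a : {set RV n}) : (1%g : {perm RV n}) @: a = a.
Proof. by rewrite (eq_imset (g := id)) ?imset_id // => x; rewrite perm1. Qed.

Lemma face_imgM (g h : {perm RV n}) f : face_img (g * h)%g f = face_img h (face_img g f).
Proof. by rewrite /face_img -imset_comp; apply: eq_imset => a; rewrite /= imsetM. Qed.

Lemma face_img1 (f : {set {set RV n}}) : face_img 1%g f = f.
Proof. by rewrite /face_img (eq_imset (g := id)) ?imset_id // => a; rewrite imset1p. Qed.

Lemma face_img_inj (g : {perm RV n}) : injective (face_img g).
Proof. exact: imset_inj (imset_inj perm_inj). Qed.

Lemma aut1 : 1%g \in Defs.Aut F.
Proof.
rewrite inE; apply/andP; split; first by apply/forallP => x; apply/forallP => y; rewrite !perm1.
by apply/forallP => f; apply/implyP => Hf; rewrite face_img1.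
Qed.

Lemma autM (g h : {perm RV n}) : g \in Defs.Aut F -> h \in Defs.Aut F -> (g * h)%g \in Defs.Aut F.
Proof.
move=> Hg Hh; rewrite inE; apply/andP; split.
  by apply/forallP => x; apply/forallP => y; rewrite !permM !aut_adj.
apply/forallP => f; apply/implyP => Hf; rewrite face_imgM.
by apply: (aut_face Hh) (aut_face Hg Hf).
Qed.

Lemma autV (g : {perm RV n}) : g \in Defs.Aut F -> (g^-1)%g \in Defs.Aut F.
Proof.
move=> Hg; rewrite inE; apply/andP; split.
  apply/forallP => x; apply/forallP => y.
  by rewrite -(aut_adj Hg) !permKV.
have E : face_img g @: F = F.
  apply/eqP; rewrite eqEcard card_imset ?leqnn ?andbT; last exact: face_img_inj.
  by apply/subsetP => _ /imsetP [f' Hf' ->]; apply: aut_face.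
apply/forallP => f; apply/implyP => Hf.
move: Hf; rewrite -{1}E => /imsetP [f' Hf' ->].
by rewrite -face_imgM mulgV face_img1.
Qed.

Lemma flag_actM (g h : {perm RV n}) (p : flag n) : flag_act (g * h)%g p = flag_act h (flag_act g p).
Proof. by rewrite /flag_act /= permM imsetM face_imgM. Qed.

Lemma flag_act1 (p : flag n) : flag_act 1%g p = p.
Proof. by case: p => [[x e] f]; rewrite /flag_act /= perm1 imset1p face_img1. Qed.

Lemma so_refl (p : flag n) : same_orbit F p p.
Proof. by exists 1%g; rewrite ?aut1 ?flag_act1. Qed.

Lemma so_sym (p q : flag n) : same_orbit F p q -> same_orbit F q p.
Proof. by case=> g Hg <-; exists (g^-1)%g; rewrite ?autV // -flag_actM mulgV flag_act1. Qed.

Lemma so_trans (p q r : flag n) : same_orbit F p q -> same_orbit F q r -> same_orbit F p r.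
Proof. by case=> g Hg <- [h Hh <-]; exists (g * h)%g; rewrite ?autM // flag_actM. Qed.

Hypothesis classF : class2_01 F.

Lemma two_orbits (p q1 q2 : flag n) : is_flag F p -> is_flag F q1 -> is_flag F q2 ->
  ~ same_orbit F q1 q2 -> same_orbit F p q1 \/ same_orbit F p q2.
Proof.
case: classF => [[p1 [p2 [_ _ _ Hc]]] _ _ _] Fp F1 F2 N12.
have O := Hc _ Fp; have O1 := Hc _ F1; have O2 := Hc _ F2.
case: O1 => O1; case: O2 => O2.
- by exfalso; apply: N12; apply: so_trans (so_sym O1) O2.
- case: O => O; first by left; apply: so_trans (so_sym O) O1.
  by right; apply: so_trans (so_sym O) O2.
- case: O => O; first by right; apply: so_trans (so_sym O) O2.
  by left; apply: so_trans (so_sym O) O1.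
- by exfalso; apply: N12; apply: so_trans (so_sym O1) O2.
Qed.
End T.

Section T.
Variable n : nat.
Hypothesis n3 : 2 < n.
Variable F : {set {set {set RV n}}}.
Hypothesis mapF : is_map F.

Lemma radjE (x y : RV n) : radj x y = adjI x.2 y.2.
Proof. by []. Qed.

Lemma radj_irr (x : RV n) : radj x x = false.
Proof.
rewrite radjE /adjI orbb; apply/negP => /eqP E.
have := idx_neq1 n3 x.2; rewrite idx_val.
suff -> : idx n3 (x.2 + 1) = x.2 by rewrite eqxx.
by apply/val_inj; rewrite /= addn1 E.
Qed.

Lemma redgesP (e : {set RV n}) : e \in redges n -> exists x y, [/\ radj x y, x != y & e = [set x; y]].
Proof.
case/imsetP => -[x y]; rewrite inE /= => H ->; exists x, y; split => //.
by apply/eqP => E; move: H; rewrite E radj_irr.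
Qed.

Lemma set2_redges (x y : RV n) : radj x y -> [set x; y] \in redges n.
Proof. by move=> H; apply/imsetP; exists (x, y); rewrite // inE. Qed.

Lemma edge_eq (e : {set RV n}) x y : e \in redges n -> x \in e -> y \in e -> x != y -> e = [set x; y].
Proof.
case/redgesP => a [b [_ ab ->]]; rewrite !inE.
by case/orP => /eqP -> /orP [] /eqP -> //; rewrite ?eqxx // => _; rewrite setUC.
Qed.

Lemma card2_eq (T : finType) (S : {set T}) a b : #|S| = 2 -> a \in S -> b \in S -> a != b ->
  forall c, c \in S -> c = a \/ c = b.
Proof.
move=> C aS bS ab.
have E : [set a; b] = S.
  apply/eqP; rewrite eqEcard cards2 ab C leqnn andbT.
  by apply/subsetP => z; rewrite !inE => /orP [] /eqP ->.
by move=> c; rewrite -E !inE => /orP [] /eqP; [left|right].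
Qed.

Lemma faces_of_edge (e : {set RV n}) : e \in redges n ->
  exists f1 f2, [/\ f1 != f2, f1 \in F, f2 \in F, e \in f1 & e \in f2].
Proof.
case: mapF => _ H _ /H /eqP /cards2P [f1 [f2 [ne E]]].
have : f1 \in [set f in F | e \in f] by rewrite E !inE eqxx.
have : f2 \in [set f in F | e \in f] by rewrite E !inE eqxx orbT.
by rewrite !inE => /andP [? ?] /andP [? ?]; exists f1, f2.
Qed.

Lemma face_other_edge (f : {set {set RV n}}) x a c : f \in F -> a \in f -> c \in f -> x \in a ->
  x \in c -> a != c -> forall d, d \in f -> x \in d -> d = a \/ d = c.
Proof.
case: mapF => Hc _ _ fF af cf xa xc ac d df xd.
case: (Hc f fF) => _ _ /(_ x) Hx _.
have aS : a \in [set e in f | x \in e] by rewrite inE af xa.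
have cS : c \in [set e in f | x \in e] by rewrite inE cf xc.
have dS : d \in [set e in f | x \in e] by rewrite inE df xd.
have C : #|[set e in f | x \in e]| = 2.
  move: Hx; rewrite in_cons in_cons in_nil orbF => /orP [] /eqP C0 //.
  by move: aS; rewrite (cards0_eq C0) inE.
exact: card2_eq C aS cS ac d dS.
Qed.

Lemma link_one (t : {perm RV n}) x a c f h : t \in Defs.Aut F -> is_flag F (x, a, f) ->
  t x = x -> t @: a = a -> face_img t f = f -> h \in F -> a \in h -> c \in h -> x \in c ->
  face_img t h = h /\ t @: c = c.
Proof.
move=> At [xa ae fF af] tx ta tf hF ah ch xc.
have th : face_img t h = h.
  case: (eqVneq h f) => [-> //|hf].
  case: mapF => _ H2 _; have C := H2 a ae.
  have fS : f \in [set g in F | a \in g] by rewrite inE fF af.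
  have hS : h \in [set g in F | a \in g] by rewrite inE hF ah.
  have tS : face_img t h \in [set g in F | a \in g].
    by rewrite inE (aut_face At hF) -ta; apply: imset_f.
  have fh : f != h by rewrite eq_sym.
  case: (card2_eq C fS hS fh tS) => [|//].
  by rewrite -tf => /face_img_inj E; move: hf; rewrite E eqxx.
split=> //.
case: (eqVneq a c) => [<- //|ac].
have d1 : t @: c \in h by rewrite -th; apply: imset_f.
have d2 : x \in t @: c by rewrite -tx; apply: imset_f.
case: (face_other_edge hF ah ch xa xc ac d1 d2) => [|//].
by rewrite -ta => /(imset_inj perm_inj) E; move: ac; rewrite E eqxx.
Qed.

Lemma link_all (t : {perm RV n}) x a f : t \in Defs.Aut F -> is_flag F (x, a, f) ->
  t x = x -> t @: a = a -> face_img t f = f ->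
  forall b, b \in redges n -> x \in b ->
  exists f', [/\ is_flag F (x, b, f'), t @: b = b & face_img t f' = f'].
Proof.
move=> At Fl tx ta tf b be xb.
case: mapF => _ _ H3.
case: Fl => [xa ae fF af].
move: (H3 x a b ae be xa xb) => /connectP [p pth ->] {b be xb}.
elim: p a f xa ae fF af ta tf pth => [|c p IH] a f xa ae fF af ta tf /=.
  by move=> _; exists f; split.
case/andP => /and5P [_ ce _ xc /existsP [h /andP [hF /andP [ah ch]]]] pth.
have [th tc] := link_one At (And4 xa ae fF af) tx ta tf hF ah ch xc.
exact: IH xc ce hF ch tc th pth.
Qed.

Lemma edge_step (t : {perm RV n}) (x y : RV n) (e : {set RV n}) : x \in e -> e \in redges n -> t x = x -> t @: e = e -> y \in e -> t y = y.
Proof.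
move=> xe ee tx te ye.
case: (eqVneq x y) => [<- //|xy].
have E := edge_eq ee xe ye xy.
have : t y \in e by rewrite -te; apply: imset_f.
rewrite E !inE => /orP [] /eqP // H.
by move: xy; rewrite -tx in H; rewrite (perm_inj H) eqxx.
Qed.

End T.


Section T.
Variable n : nat.
Hypothesis n3 : 2 < n.
Variable F : {set {set {set RV n}}}.
Hypothesis mapF : is_map F.

Definition Rfix (t : {perm RV n}) (k : nat) := forall b, exists e f,
  [/\ is_flag F ((b, idx n3 k), e, f), t (b, idx n3 k) = (b, idx n3 k), t @: e = e & face_img t f = f].

Lemma fix_step (t : {perm RV n}) (w : RV n) e f k : t \in Defs.Aut F -> w.2 = idx n3 k ->
  is_flag F (w, e, f) -> t w = w -> t @: e = e -> face_img t f = f -> Rfix t (k + 1).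
Proof.
move=> At wk Fl tw te tf b.
set y := (b, idx n3 (k + 1)).
have ad : radj w y by rewrite radjE wk adj_succ.
have ce := set2_redges ad.
have wc : w \in [set w; y] by rewrite !inE eqxx.
have [f' [[_ _ f'F cf'] tc tf']] := link_all mapF At Fl tw te tf ce wc.
have yc : y \in [set w; y] by rewrite !inE eqxx orbT.
exists [set w; y], f'; split => //.
exact: edge_step wc ce tw tc yc.
Qed.

Lemma free (t : {perm RV n}) x e f : t \in Defs.Aut F -> is_flag F (x, e, f) ->
  t x = x -> t @: e = e -> face_img t f = f -> t = 1%g.
Proof.
move=> At Fl tx te tf.
have R0 : Rfix t (x.2 + 1).
  by apply: fix_step At _ Fl tx te tf; rewrite idx_val.
have Rm : forall m, Rfix t (x.2 + 1 + m).
  elim=> [|m IH]; first by rewrite addn0.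
  have [e' [f' [Fl' t' te' tf']]] := IH false.
  by rewrite addnS -addn1; apply: fix_step At _ Fl' t' te' tf'.
apply/permP => -[b j]; rewrite perm1.
have [e' [f' [_ H _ _]]] := Rm (j + n - x.2 - 1) b.
have E : x.2 + 1 + (j + n - x.2 - 1) = j + n.
  have := ltn_ord x.2; lia.
by move: H; rewrite E idx_addn idx_val.
Qed.
End T.

Section T.
Variable n : nat.
Hypothesis n3 : 2 < n.
Hypothesis n4 : n != 4.
Variable F : {set {set {set RV n}}}.
Hypothesis mapF : is_map F.
Hypothesis classF : class2_01 F.

Local Notation idx := (idx n3).
Local Notation AutF := (Defs.Aut F).

Lemma twin_pres (g : {perm RV n}) (x y : RV n) : g \in AutF -> x.2 = y.2 -> (g x).2 = (g y).2.
Proof.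
move=> Ag xy; apply: (twinI n3 n4) => m.
have H z : adjI (g z).2 m = radj z ((g^-1)%g (false, m)) by rewrite -(aut_adj Ag) permKV.
by rewrite !H !radjE xy.
Qed.

Definition D (g : {perm RV n}) (j : 'I_n) := (g (false, j)).2.

Lemma DE (g : {perm RV n}) b j : g \in AutF -> (g (b, j)).2 = D g j.
Proof. by move=> Ag; apply: twin_pres. Qed.

Lemma D_inj (g : {perm RV n}) a b : g \in AutF -> D g a = D g b -> a = b.
Proof.
move=> Ag E; have := twin_pres (autV Ag) E.
by rewrite !permK.
Qed.

Lemma D_adj (g : {perm RV n}) a b : g \in AutF -> adjI (D g a) (D g b) = adjI a b.
Proof. by move=> Ag; rewrite /D -radjE (aut_adj Ag). Qed.

Lemma nbrP k (m : 'I_n) : adjI (idx (k + 1)) m -> m = idx k \/ m = idx (k + 2).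
Proof. by rewrite nbr => /orP [] /eqP; [left|right]. Qed.

Lemma idx_reach k (j : 'I_n) : exists m, idx (k + m) = j.
Proof.
exists (j + (n - k %% n)); apply/val_inj => /=.
have L := ltn_pmod k (npos n3).
rewrite {1}(divn_eq k n).
have -> : k %/ n * n + k %% n + (j + (n - k %% n)) = k %/ n * n + (n + j) by lia.
by rewrite modnMDl modnDl modn_small.
Qed.

Definition Z (t : {perm RV n}) k := t (false, idx k) == (false, idx k).

Lemma set2_img (g : {perm RV n}) (x y : RV n) : g @: [set x; y] = [set g x; g y].
Proof. by rewrite imsetU1 imset_set1. Qed.

Lemma lemA k : exists t, [/\ t \in AutF, IP t, Z t k & ~~ Z t (k + 1)].
Proof.
set x : RV n := (false, idx k); set y : RV n := (false, idx (k + 1)); set y' : RV n := (true, idx (k + 1)).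
have axy : radj x y by rewrite radjE adj_succ.
have axy' : radj x y' by rewrite radjE adj_succ.
have ee := set2_redges axy; have ee' := set2_redges axy'.
have [f1 [_ [_ f1F _ ef1 _]]] := faces_of_edge mapF ee.
have [g1 [g2 [g12 g1F g2F eg1 eg2]]] := faces_of_edge mapF ee'.
have xe : x \in [set x; y] by rewrite !inE eqxx.
have xe' : x \in [set x; y'] by rewrite !inE eqxx.
have Fp : is_flag F (x, [set x; y], f1) by [].
have Fq1 : is_flag F (x, [set x; y'], g1) by [].
have Fq2 : is_flag F (x, [set x; y'], g2) by [].
case: classF => _ _ _ C4.
have N12 : ~ same_orbit F (x, [set x; y'], g1) (x, [set x; y'], g2).
  by apply: C4 => //; split.
suff key : forall g, g \in AutF -> g x = x -> g @: [set x; y] = [set x; y'] ->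
    exists t, [/\ t \in AutF, IP t, Z t k & ~~ Z t (k + 1)].
  have [O|O] := two_orbits classF Fp Fq1 Fq2 N12;
    case: O => g Ag; rewrite /flag_act /= => -[gx ge _]; exact: key Ag gx ge.
move=> g Ag gx ge.
have gy : g y = y'.
  have : g y \in [set x; y'] by rewrite -ge; apply: imset_f; rewrite !inE eqxx orbT.
  rewrite !inE => /orP [/eqP H|/eqP //].
  exfalso; move: H; rewrite -{1}gx => /perm_inj /(congr1 snd) /= E.
  by move: (idx_neq1 n3 k); rewrite E eqxx.
have H : forall m, D g (idx (k + m)) = idx (k + m) /\ D g (idx (k + m + 1)) = idx (k + m + 1).
  elim=> [|m [H0 H1]].
    by rewrite !addn0 /D -/x gx -/y gy.
  rewrite addnS -addn1; split => //.
  have A := adj_succ n3 (k + m + 1).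
  rewrite -(D_adj _ _ Ag) H1 in A.
  case: (nbrP A) => E; last by rewrite E -!addnA.
  exfalso; rewrite -H0 in E; move: (D_inj Ag E) => E'.
  by move: (idx_neq2 n3 (k + m)); rewrite -E' -!addnA eqxx.
exists g; split => //.
- move=> [b j]; rewrite (DE _ _ Ag) /=.
  by have [m <-] := idx_reach k j; case: (H m).
- by rewrite /Z -/x gx eqxx.
by rewrite /Z -/y gy xpair_eqE.
Qed.



Lemma lemB t k : t \in AutF -> IP t -> Z t k -> Z t (k + 1) -> t = 1%g.
Proof.
move=> At It Z0 Z1.
set x : RV n := (false, idx k); set y : RV n := (false, idx (k + 1)).
have axy : radj x y by rewrite radjE adj_succ.
have ee := set2_redges axy.
have [f1 [_ [_ f1F _ ef1 _]]] := faces_of_edge mapF ee.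
have xe : x \in [set x; y] by rewrite !inE eqxx.
have tx : t x = x by apply/eqP.
have ty : t y = y by apply/eqP.
have te : t @: [set x; y] = [set x; y] by rewrite set2_img tx ty.
case: (eqVneq (face_img t f1) f1) => [tf|tf].
  exact: (free n3 mapF At (And4 xe ee f1F ef1) tx te tf).
exfalso.
case: classF => _ _ _ C4.
apply: (C4 (x, [set x; y], f1) (x, [set x; y], face_img t f1)) => //.
- split => /=; [by [] | by [] | exact: (@aut_face n F t At f1 f1F) |].
  by rewrite -{1}te /face_img; apply: imset_f.
- by split => //; rewrite eq_sym.
by exists t => //; rewrite /flag_act /= tx te.
Qed.

Lemma conj_eval (g t : {perm RV n}) x : (t ^ (g^-1))%g x = (g^-1)%g (t (g x)).
Proof. by rewrite /conjg invgK !permM. Qed.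

Lemma conj_in (g t : {perm RV n}) : g \in AutF -> t \in AutF -> (t ^ (g^-1))%g \in AutF.
Proof.
move=> Ag At; rewrite /conjg invgK mulgA.
exact: (@autM n F _ _ (@autM n F _ _ Ag At) (@autV n F _ Ag)).
Qed.

Lemma conj_IP (g t : {perm RV n}) : g \in AutF -> IP t -> IP (t ^ (g^-1))%g.
Proof.
move=> Ag It x; rewrite conj_eval.
by rewrite (twin_pres (autV Ag) (It (g x))) permK.
Qed.

Lemma conj_Z (g t : {perm RV n}) k : g \in AutF -> IP t ->
  Z (t ^ (g^-1))%g k = Z t (D g (idx k)).
Proof.
move=> Ag It; rewrite /Z conj_eval -(inj_eq (@perm_inj _ g)) permKV idx_val.
rewrite [g (false, idx k)]surjective_pairing -/(D g (idx k)) (IP_fix It).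
case: ifP => _; first by rewrite eqxx.
by rewrite xpair_eqE; case: (g (false, idx k)).1.
Qed.

Lemma edge_flip k : exists2 g, g \in AutF &
  [/\ D g (idx (k + 1)) = idx (k + 2), D g (idx (k + 2)) = idx (k + 1),
      D g (idx k) = idx (k + 3) & D g (idx (k + 3)) = idx k].
Proof.
set x : RV n := (false, idx (k + 1)); set y : RV n := (false, idx (k + 2)).
have axy : radj x y by have := adj_succ n3 (k + 1); rewrite -addnA.
have ee := set2_redges axy.
have [f1 [_ [_ f1F _ ef1 _]]] := faces_of_edge mapF ee.
have xe : x \in [set x; y] by rewrite !inE eqxx.
have ye : y \in [set x; y] by rewrite !inE eqxx orbT.
have xy : x != y.
  apply/negP => /eqP /(congr1 snd) /= E.
  by move: (idx_neq1 n3 (k + 1)); rewrite -addnA E eqxx.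
case: classF => _ C2 _ _.
have [g Ag] := C2 (x, [set x; y], f1) (y, [set x; y], f1) (And4 xe ee f1F ef1) (And4 ye ee f1F ef1)
  (And3 xy erefl erefl).
rewrite /flag_act /= => -[gx ge _].
have gy : g y = x.
  have : g y \in [set x; y] by rewrite -{1}ge; apply: imset_f.
  rewrite !inE => /orP [/eqP //|/eqP H].
  by move: xy; rewrite -(inj_eq (@perm_inj _ g)) gx H eqxx.
have D1 : D g (idx (k + 1)) = idx (k + 2) by rewrite /D -/x gx.
have D2 : D g (idx (k + 2)) = idx (k + 1) by rewrite /D -/y gy.
exists g => //; split => //.
- have A := adj_succ n3 k.
  rewrite -(D_adj _ _ Ag) D1 adjI_sym (_ : k + 2 = k + 1 + 1) ?nbr in A; last by rewrite -addnA.
  case/orP: A => /eqP E; last by rewrite E -!addnA.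
  exfalso; rewrite -D2 in E; move: (D_inj Ag E) => E'.
  by move: (idx_neq2 n3 k); rewrite E' eqxx.
- have A := adj_succ n3 (k + 2).
  rewrite -(D_adj _ _ Ag) D2 nbr in A.
  case/orP: A => /eqP E; first by rewrite -E -addnA.
  exfalso; rewrite -D1 in E; move: (D_inj Ag E) => E'.
  by move: (idx_neq2 n3 (k + 1)); rewrite -E' -!addnA eqxx.
Qed.

End T.

Section T.
Variable n : nat.
Hypothesis n3 : 2 < n.
Hypothesis n4 : n != 4.
Variable F : {set {set {set RV n}}}.
Hypothesis mapF : is_map F.
Hypothesis classF : class2_01 F.

Local Notation idx := (idx n3).
Local Notation AutF := (Defs.Aut F).
Local Notation Z := (Z n3).

Definition TT (t : {perm RV n}) := t \in AutF /\ IP t.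

Lemma Zmul (t1 t2 : {perm RV n}) k : IP t1 -> IP t2 -> Z (t1 * t2)%g k = (Z t1 k == Z t2 k).
Proof.
move=> I1 I2; rewrite /Z permM (IP_fix I1).
case: (t1 (false, idx k) == (false, idx k)); rewrite (IP_fix I2);
  case: (t2 (false, idx k) == (false, idx k)) => /=; by rewrite ?eqxx ?xpair_eqE.
Qed.

Lemma IPM (t1 t2 : {perm RV n}) : IP t1 -> IP t2 -> IP (t1 * t2)%g.
Proof. by move=> I1 I2 x; rewrite permM I2 I1. Qed.

Lemma Zext (t1 t2 : {perm RV n}) : IP t1 -> IP t2 -> (forall k, Z t1 k = Z t2 k) -> t1 = t2.
Proof.
move=> I1 I2 H; apply/permP => -[b j]; rewrite (IP_fix I1) (IP_fix I2).
by have := H j; rewrite /Z idx_val => ->.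
Qed.

Lemma Z1 k : Z 1%g k.
Proof. by rewrite /Z perm1. Qed.

Lemma IP1 : IP (1%g : {perm RV n}).
Proof. by move=> x; rewrite perm1. Qed.

Lemma Zper (t : {perm RV n}) k c : Z t (k + c * n) = Z t k.
Proof.
rewrite /Z; suff -> : idx (k + c * n) = idx k by [].
by apply/val_inj; rewrite /= addnC modnMDl.
Qed.

Lemma Zidx (t : {perm RV n}) k : Z t (val (idx k)) = Z t k.
Proof. by rewrite /Z idx_val. Qed.

Lemma Bn (t : {perm RV n}) k : TT t -> t != 1%g -> Z t k -> ~~ Z t (k + 1).
Proof.
case=> At It nt Zk; apply/negP => Zk1.
by move: nt; rewrite (lemB mapF classF At It Zk Zk1) eqxx.
Qed.

Lemma Bp (t : {perm RV n}) k : TT t -> t != 1%g -> Z t (k + 1) -> ~~ Z t k.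
Proof. by move=> Tt nt Zk1; apply/negP => Zk; move: (Bn Tt nt Zk); rewrite Zk1. Qed.

Lemma Uniq (t t' : {perm RV n}) k : TT t -> TT t' -> t != 1%g -> t' != 1%g -> Z t k -> Z t' k -> t = t'.
Proof.
move=> Tt Tt' nt nt' Z0 Z0'.
have [At It] := Tt; have [At' It'] := Tt'.
have Is := IPM It It'.
have s1 : (t * t')%g = 1%g.
  apply: (lemB mapF classF (autM At At') Is (k := k)).
    by rewrite Zmul // Z0 Z0'.
  by rewrite Zmul // (negbTE (Bn Tt nt Z0)) (negbTE (Bn Tt' nt' Z0')).
apply: Zext => // m.
by have := Z1 m; rewrite -s1 Zmul // => /eqP.
Qed.

Definition Pp k := exists t : {perm RV n}, [/\ TT t, t != 1%g, Z t k & Z t (k + 2)].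

Lemma Pshift k : Pp k <-> Pp (k + 1).
Proof.
have [g Ag [D1 D2 D0 D3]] := edge_flip n3 n4 mapF classF k.
split => -[t [[At It] nt Za Zb]]; exists (t ^ (g^-1))%g; split.
- by split; [exact: conj_in Ag At | exact: (conj_IP n3 n4 Ag It)].
- by rewrite conjg_eq1.
- by rewrite (conj_Z n3 _ Ag It) D1 Zidx.
- by rewrite (conj_Z n3 _ Ag It) -addnA /= D3 Zidx.
- by split; [exact: conj_in Ag At | exact: (conj_IP n3 n4 Ag It)].
- by rewrite conjg_eq1.
- by rewrite (conj_Z n3 _ Ag It) D0 Zidx; rewrite -addnA in Zb.
- by rewrite (conj_Z n3 _ Ag It) D2 Zidx.
Qed.

End T.

Section T.
Variable n : nat.
Hypothesis n3 : 2 < n.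
Hypothesis n4 : n != 4.
Variable F : {set {set {set RV n}}}.
Hypothesis mapF : is_map F.
Hypothesis classF : class2_01 F.

Local Notation idx := (idx n3).
Local Notation AutF := (Defs.Aut F).
Local Notation Z := (Z n3).
Local Notation TT := (TT F).
Local Notation Pp := (Pp n3 F).

Lemma Pall : Pp 0 -> forall k, Pp k.
Proof. by move=> H; elim=> // k IH; rewrite -addn1; apply: (Pshift n3 n4 mapF classF k).1. Qed.

Lemma Pnone : ~ Pp 0 -> forall k, ~ Pp k.
Proof. by move=> H; elim=> // k IH; rewrite -addn1 => /(Pshift n3 n4 mapF classF k).2. Qed.

Lemma lemA' k : exists t, [/\ TT t, t != 1%g, Z t k & ~~ Z t (k + 1)].
Proof.
have [t [At It Z0 Z1']] := lemA n3 n4 mapF classF k.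
exists t; split => //; apply/eqP => E; move: Z1'; rewrite E.
by rewrite Z1.
Qed.

Lemma Ttuple t : IP t -> t = tuple_elt (fun j : 'I_n => ~~ Z t j).
Proof.
move=> It; rewrite {1}(IP_tuple It); apply: tuple_ext => j.
by rewrite /Z idx_val.
Qed.

Lemma set4 a1 a2 a3 a4 : TT a1 -> TT a2 -> TT a3 -> TT a4 ->
  (forall t, TT t -> [\/ t = a1, t = a2, t = a3 | t = a4]) -> Tgrp F = [set a1; a2; a3; a4].
Proof.
move=> T1 T2 T3 T4 H; apply/setP => t; rewrite /Tgrp in_setI.
apply/idP/idP.
  case/andP => Hn Ha; have It := (Ngrp_IP t).1 Hn.
  by case: (H t (conj Ha It)) => ->; rewrite !inE !eqxx ?orbT.
have K : forall a, TT a -> (a \in Ngrp n) && (a \in AutF).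
  by move=> a [Aa Ia]; rewrite Aa andbT; apply/Ngrp_IP.
by rewrite ?in_setU1 ?in_setU ?in_set1 -?orbA => /or4P [] /eqP ->; apply: K.
Qed.

Lemma step2 t r : (forall k, Pp k) -> TT t -> t != 1%g -> Z t r -> forall m, Z t (r + 2 * m).
Proof.
move=> HP Tt nt Zr; elim=> [|m IH]; first by rewrite muln0 addn0.
have [t' [Tt' nt' Z0 Z2]] := HP (r + 2 * m).
rewrite (Uniq mapF classF Tt Tt' nt nt' IH Z0).
by have -> : r + 2 * m.+1 = r + 2 * m + 2 by lia.
Qed.
End T.

Section T.
Variable n : nat.
Hypothesis n3 : 2 < n.
Hypothesis n4 : n != 4.
Variable F : {set {set {set RV n}}}.
Hypothesis mapF : is_map F.
Hypothesis classF : class2_01 F.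

Local Notation idx := (idx n3).
Local Notation AutF := (Defs.Aut F).
Local Notation Z := (Z n3).
Local Notation TT := (TT F).
Local Notation Pp := (Pp n3 F).

Lemma parity t r : (forall k, Pp k) -> TT t -> t != 1%g -> Z t r ->
  forall k, Z t (r + k) = ~~ odd k.
Proof.
move=> HP Tt nt Zr k.
have E := odd_double_half k.
case: (boolP (odd k)) => ok.
  have -> : r + k = r + 2 * k./2 + 1 by move: E; rewrite ok; lia.
  by apply/negbTE; apply: (Bn mapF classF Tt nt); apply: (step2 n4 mapF classF HP Tt nt Zr).
have -> : r + k = r + 2 * k./2 by move: E; rewrite (negbTE ok); lia.
by apply: (step2 n4 mapF classF HP Tt nt Zr).
Qed.

Lemma TTM t1 t2 : TT t1 -> TT t2 -> TT (t1 * t2)%g.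
Proof. by case=> A1 I1 [A2 I2]; split; [exact: autM | exact: IPM]. Qed.

Lemma TT1 : TT 1%g.
Proof. by split; [exact: aut1 | exact: IP1]. Qed.

Lemma even_case : (forall k, Pp k) ->
  Tgrp F = [set tuple_elt (fun _ => false);
                  tuple_elt (fun j : 'I_n => odd (val j));
                  tuple_elt (fun j : 'I_n => ~~ odd (val j));
                  tuple_elt (fun _ => true)] /\ 2 %| n.
Proof.
move=> HP.
have [a [Ta na Za _]] := lemA' n3 n4 mapF classF 0.
have [b [Tb nb Zb _]] := lemA' n3 n4 mapF classF 1.
have Pa := parity HP Ta na Za; have Pb := parity HP Tb nb Zb.
have Za' : forall k, Z a k = ~~ odd k by move=> k; rewrite -(Pa k).
have Zb' : forall k, Z b k = odd k.
  case=> [|k]; last by rewrite -[in LHS]add1n Pb.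
  by apply/negbTE; apply: (Bp mapF classF Tb nb); rewrite add0n.
have Zc : forall k, Z (a * b)%g k = false.
  by move=> k; rewrite (Zmul n3 k Ta.2 Tb.2) Za' Zb'; case: (odd k).
split; last first.
  by have := Zper n3 a 0 1; rewrite add0n mul1n Za => E; rewrite dvdn2 -Za' E.
rewrite tuple_false.
have -> : tuple_elt (fun j : 'I_n => odd (val j)) = a.
  by rewrite (Ttuple n3 Ta.2); apply: tuple_ext => j; rewrite Za' negbK.
have -> : tuple_elt (fun j : 'I_n => ~~ odd (val j)) = b.
  by rewrite (Ttuple n3 Tb.2); apply: tuple_ext => j; rewrite Zb'.
have -> : tuple_elt (fun _ : 'I_n => true) = (a * b)%g.
  by rewrite (Ttuple n3 (IPM Ta.2 Tb.2)); apply: tuple_ext => j; rewrite Zc.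
apply: set4 => //; [exact: TT1 | exact: TTM |].
move=> t Tt.
case: (eqVneq t 1%g) => [->|nt]; first by constructor 1.
case: (boolP [exists j : 'I_n, Z t j]) => [/existsP [j Zj]|].
  case: (boolP (odd j)) => oj.
    by constructor 3; apply: (Uniq mapF classF Tt Tb nt nb Zj); rewrite Zb'.
  by constructor 2; apply: (Uniq mapF classF Tt Ta nt na Zj); rewrite Za'.
move/existsPn => H; constructor 4.
apply: (Zext Tt.2 (IPM Ta.2 Tb.2)) => k.
by rewrite Zc -(Zidx n3); apply/negbTE; apply: H.
Qed.
End T.

Section T.
Variable n : nat.
Hypothesis n3 : 2 < n.
Hypothesis n4 : n != 4.
Variable F : {set {set {set RV n}}}.
Hypothesis mapF : is_map F.
Hypothesis classF : class2_01 F.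

Local Notation idx := (idx n3).
Local Notation AutF := (Defs.Aut F).
Local Notation Z := (Z n3).
Local Notation TT := (TT F).
Local Notation Pp := (Pp n3 F).

Lemma three_step t k : (forall k, ~ Pp k) -> TT t -> t != 1%g -> Z t k -> Z t (k + 3).
Proof.
move=> HP Tt nt Zk.
have [t1 [Tt1 nt1 Z1k Z1k']] := lemA' n3 n4 mapF classF (k + 1).
have m1 : ~~ Z t1 k by apply: (Bp mapF classF Tt1 nt1).
have m2 : ~~ Z t (k + 1) by apply: (Bn mapF classF Tt nt).
have m3 : ~~ Z t (k + 2) by apply/negP => H; apply: (HP k); exists t.
have m4 : ~~ Z t1 (k + 3).
  apply/negP => H; apply: (HP (k + 1)); exists t1; split => //.
  by rewrite -addnA.
have Ts := TTM Tt Tt1.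
have ns : (t * t1)%g != 1%g.
  apply/eqP => E; have := Z1 n3 k; rewrite -E (Zmul n3 k Tt.2 Tt1.2) Zk.
  by rewrite (negbTE m1).
have Zs : Z (t * t1)%g (k + 2).
  rewrite (Zmul n3 _ Tt.2 Tt1.2) (negbTE m3).
  by move: Z1k'; rewrite -addnA /= => /negbTE ->.
have := Bn mapF classF Ts ns Zs.
rewrite (Zmul n3 _ Tt.2 Tt1.2) -addnA /= (negbTE m4).
by case: (Z t (k + 3)).
Qed.

Lemma three_all t r : (forall k, ~ Pp k) -> TT t -> t != 1%g -> Z t r ->
  forall m, [/\ Z t (r + 3 * m), ~~ Z t (r + 3 * m + 1) & ~~ Z t (r + 3 * m + 2)].
Proof.
move=> HP Tt nt Zr m.
have Z0 : Z t (r + 3 * m).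
  elim: m => [|m IH]; first by rewrite muln0 addn0.
  have -> : r + 3 * m.+1 = r + 3 * m + 3 by lia.
  exact: three_step.
split => //.
  exact: (Bn mapF classF Tt nt).
by apply/negP => H; apply: (HP (r + 3 * m)); exists t.
Qed.

Lemma three_pattern t r : (forall k, ~ Pp k) -> TT t -> t != 1%g -> Z t r -> r < 3 ->
  forall k, Z t k = (k %% 3 == r).
Proof.
move=> HP Tt nt Zr r3 k.
rewrite -(Zper n3 t k 3).
have := divn_eq (k + 3 * n - r) 3.
set q := (k + 3 * n - r) %/ 3; set e := (k + 3 * n - r) %% 3 => E.
have e3 : e < 3 by rewrite /e ltn_mod.
have [A0 A1 A2] := three_all HP Tt nt Zr q.
case: e E e3 => [|[|[|e]]] E e3 //.
- have -> : k + 3 * n = r + 3 * q by lia.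
  rewrite A0; symmetry; apply/eqP; lia.
- have -> : k + 3 * n = r + 3 * q + 1 by lia.
  rewrite (negbTE A1); symmetry; apply/eqP; lia.
- have -> : k + 3 * n = r + 3 * q + 2 by lia.
  rewrite (negbTE A2); symmetry; apply/eqP; lia.
Qed.

Lemma three_case : (forall k, ~ Pp k) ->
  Tgrp F = [set tuple_elt (fun _ => false);
                  tuple_elt (fun j : 'I_n => val j %% 3 != 0);
                  tuple_elt (fun j : 'I_n => val j %% 3 != 1);
                  tuple_elt (fun j : 'I_n => val j %% 3 != 2)] /\ 3 %| n.
Proof.
move=> HP.
have [a [Ta na Za _]] := lemA' n3 n4 mapF classF 0.
have [b [Tb nb Zb _]] := lemA' n3 n4 mapF classF 1.
have Za' := three_pattern HP Ta na Za isT.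
have Zb' := three_pattern HP Tb nb Zb isT.
have Zc : forall k, Z (a * b)%g k = (k %% 3 == 2).
  move=> k; rewrite (Zmul n3 k Ta.2 Tb.2) Za' Zb'.
  have : k %% 3 < 3 by rewrite ltn_mod.
  by case: (k %% 3) => [|[|[|]]].
have nc : (a * b)%g != 1%g.
  by apply/eqP => E; have := Z1 n3 0; rewrite -E Zc.
split; last first.
  by have := Zper n3 a 0 1; rewrite add0n mul1n Za Za' /dvdn => ->.
rewrite tuple_false.
have -> : tuple_elt (fun j : 'I_n => val j %% 3 != 0) = a.
  by rewrite (Ttuple n3 Ta.2); apply: tuple_ext => j; rewrite Za'.
have -> : tuple_elt (fun j : 'I_n => val j %% 3 != 1) = b.
  by rewrite (Ttuple n3 Tb.2); apply: tuple_ext => j; rewrite Zb'.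
have -> : tuple_elt (fun j : 'I_n => val j %% 3 != 2) = (a * b)%g.
  by rewrite (Ttuple n3 (IPM Ta.2 Tb.2)); apply: tuple_ext => j; rewrite Zc.
apply: set4 => //; [exact: TT1 | exact: TTM |].
move=> t Tt.
case: (eqVneq t 1%g) => [->|nt]; first by constructor 1.
case: (boolP [exists j : 'I_n, Z t j]) => [/existsP [j Zj]|].
  have : j %% 3 < 3 by rewrite ltn_mod.
  case E: (val j %% 3) => [|[|[|]]] // _.
  - by constructor 2; apply: (Uniq mapF classF Tt Ta nt na Zj); rewrite Za' E.
  - by constructor 3; apply: (Uniq mapF classF Tt Tb nt nb Zj); rewrite Zb' E.
  - by constructor 4; apply: (Uniq mapF classF Tt (TTM Ta Tb) nt nc Zj); rewrite Zc E.
move/existsPn => H; exfalso.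
have Ts := TTM Tt Ta.
have Zt : forall k, Z t k = false by move=> k; rewrite -(Zidx n3); apply/negbTE; apply: H.
have s1 : (t * a)%g = 1%g.
  apply: (lemB mapF classF Ts.1 Ts.2 (k := 1)).
    by rewrite (Zmul n3 _ Tt.2 Ta.2) Zt Za'.
  by rewrite (Zmul n3 _ Tt.2 Ta.2) Zt Za'.
by have := Z1 n3 0; rewrite -s1 (Zmul n3 _ Tt.2 Ta.2) Zt Za.
Qed.
End T.


Theorem lemma3p1 (n : nat) (F : {set {set {set RV n}}}) :
  3 <= n -> n != 4 -> is_map F -> class2_01 F ->
  ((Tgrp F = [set tuple_elt (fun _ => false);
                  tuple_elt (fun j : 'I_n => val j %% 3 != 0);
                  tuple_elt (fun j : 'I_n => val j %% 3 != 1);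
                  tuple_elt (fun j : 'I_n => val j %% 3 != 2)] /\ 3 %| n)
   \/
   (Tgrp F = [set tuple_elt (fun _ => false);
                  tuple_elt (fun j : 'I_n => odd (val j));
                  tuple_elt (fun j : 'I_n => ~~ odd (val j));
                  tuple_elt (fun _ => true)] /\ 2 %| n))
  /\ gcdn n 6 != 1.
Proof.
move=> n3 n4 mapF classF.
have H : (Tgrp F = [set tuple_elt (fun _ => false);
                  tuple_elt (fun j : 'I_n => val j %% 3 != 0);
                  tuple_elt (fun j : 'I_n => val j %% 3 != 1);
                  tuple_elt (fun j : 'I_n => val j %% 3 != 2)] /\ 3 %| n)
   \/
   (Tgrp F = [set tuple_elt (fun _ => false);
                  tuple_elt (fun j : 'I_n => odd (val j));
                  tuple_elt (fun j : 'I_n => ~~ odd (val j));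
                  tuple_elt (fun _ => true)] /\ 2 %| n).
  case: (classic (Pp n3 F 0)) => P0.
    by right; apply: (@even_case n n3 n4 F mapF classF); apply: (@Pall n n3 n4 F mapF classF).
  by left; apply: (@three_case n n3 n4 F mapF classF); apply: (@Pnone n n3 n4 F mapF classF).
split => //.
case: H => [[_ d]|[_ d]]; apply/negP => /eqP g1.
  have : 3 %| gcdn n 6 by rewrite dvdn_gcd d.
  by rewrite g1.
have : 2 %| gcdn n 6 by rewrite dvdn_gcd d.
by rewrite g1.
Qed.
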